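(* Let $S=(\mathcal{E},\Sigma,X,\mathcal{O})$ be an entity and for $A\subseteq X$ define $cl(A)=\bigcap\{X\setminus O(e,p): (e,p)\in\mathcal{E}\times\Sigma,\ O(e,p)\subseteq X\setminus A\}$ (the empty intersection being $X$). Then $cl$ is a closure operator on $X$; every $O(e,p)$ is open for this closure (i.e. $X\setminus O(e,p)$ is closed); for all $e,p$ and $A\subseteq X$, $O(e,p)\subseteq X\setminus cl(A)\iff O(e,p)\subseteq X\setminus A$; and $eig(A)=eig(int(A))$, where $int(A)=X\setminus cl(X\setminus A)$.
   Context: An entity $S=(\mathcal{E},\Sigma,X,\mathcal{O})$ consists of sets $\mathcal{E},\Sigma$ and for each $e\in\mathcal{E},p\in\Sigma$ a nonempty set $O(e,p)$, with $X=\bigcup O(e,p)$. A closure operator on $X$ is a map $cl:\mathcal{P}(X)\to\mathcal{P}(X)$ with $K\subseteq cl(K)$, $K\subseteq L\Rightarrow cl(K)\subseteq cl(L)$, $cl(cl(K))=cl(K)$, $cl(\emptyset)=\emptyset$. The central eigen map is $eig(A)=\{(e,p):O(e,p)\subseteq A\}$. *)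

(* Defs.v *)
From mathcomp Require Import all_boot.
From mathcomp Require Import boolp classical_sets.
Set Implicit Arguments. Unset Strict Implicit. Unset Printing Implicit Defensive.
Local Open Scope classical_set_scope.

(* An entity: index types E (entities/experiments) and Sig (properties),
   a point type T and outcome sets O e p : set T. The carrier X is the union. *)
Section Entity.
Context {E Sig T : Type} (O : E -> Sig -> set T).

Definition carrier : set T := \bigcup_(ep in [set: E * Sig]) O ep.1 ep.2.

Definition ent_cl (A : set T) : set T :=
  carrier `&` \bigcap_(ep in [set ep : E * Sig | O ep.1 ep.2 `<=` carrier `\` A])
                 (carrier `\` O ep.1 ep.2).

Definition ent_int (A : set T) : set T := carrier `\` ent_cl (carrier `\` A).

Definition eig (A : set T) : set (E * Sig) := [set ep | O ep.1 ep.2 `<=` A].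
End Entity.

Definition is_closure_op {T : Type} (X : set T) (cl : set T -> set T) : Prop :=
  [/\ (forall K, K `<=` X -> cl K `<=` X),
      (forall K, K `<=` X -> K `<=` cl K),
      (forall K L, K `<=` X -> L `<=` X -> K `<=` L -> cl K `<=` cl L),
      (forall K, K `<=` X -> cl (cl K) = cl K)
    & cl set0 = set0].

Definition cl_closed {T : Type} (X : set T) (cl : set T -> set T) (C : set T) :=
  C `<=` X /\ cl C = C.
Definition cl_open {T : Type} (X : set T) (cl : set T -> set T) (U : set T) :=
  U `<=` X /\ cl_closed X cl (X `\` U).

(* Main.v *)
Require Import Defs.
From mathcomp Require Import all_boot.
From mathcomp Require Import boolp classical_sets.
Local Open Scope classical_set_scope.

Section H.
Context {E Sig T : Type} (O : E -> Sig -> set T).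

Lemma O_sub e p : O e p `<=` carrier O.
Proof. by move=> x Ox; exists (e, p). Qed.

Lemma clE A x : ent_cl O A x <->
  (carrier O x /\ forall e p, O e p `<=` carrier O `\` A -> ~ O e p x).
Proof.
split.
- case=> Xx H; split => // e p Hs Ox.
  by have [_ ] := H (e, p) Hs.
- case=> Xx H; split => // [[e p]] /= Hs; split => //; exact: H.
Qed.

Lemma disj_iff e p A : O e p `<=` carrier O `\` A <-> (forall x, O e p x -> ~ A x).
Proof.
split.
- by move=> H x /H [].
- by move=> H x Ox; split; [exact: O_sub Ox| exact: H].
Qed.
End H.

Theorem mainTheorem18 (E Sig T : Type) (O : E -> Sig -> set T)
  (HO : forall e p, O e p !=set0) :
  [/\ is_closure_op (carrier O) (ent_cl O),
      (forall e p, cl_open (carrier O) (ent_cl O) (O e p)),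
      (forall e p (A : set T), A `<=` carrier O ->
         (O e p `<=` carrier O `\` ent_cl O A <-> O e p `<=` carrier O `\` A))
    & (forall A : set T, A `<=` carrier O -> eig O A = eig O (ent_int O A))].
Proof.
have ext : forall K, K `<=` carrier O -> K `<=` ent_cl O K.
  move=> K KX x Kx; apply/clE; split; first exact: KX.
  by move=> e p /disj_iff H /H.
have third : forall e p (A : set T), A `<=` carrier O ->
    (O e p `<=` carrier O `\` ent_cl O A <-> O e p `<=` carrier O `\` A).
  move=> e p A AX; split.
  - move=> /disj_iff H; apply/disj_iff => x Ox Ax; exact: (H x Ox (ext _ AX _ Ax)).
  - move=> Hs; apply/disj_iff => x Ox /clE [_ H]; exact: (H e p Hs Ox).
have clX : forall K, ent_cl O K `<=` carrier O by move=> K x /clE [].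
have cl_clo : forall e p, ent_cl O (carrier O `\` O e p) = carrier O `\` O e p.
  move=> e p; apply/seteqP; split; last first.
    by apply: ext => x [].
  move=> x /clE [Xx H]; split => // Ox; apply: (H e p _ Ox).
  by apply/disj_iff => y Oy [].
split.
- split.
  + by move=> K _.
  + exact: ext.
  + move=> K L _ _ KL x /clE [Xx H]; apply/clE; split => // e p Hs.
    apply: H; apply/disj_iff => y Oy Ky; move/disj_iff: Hs => Hs.
    exact: (Hs y Oy (KL _ Ky)).
  + move=> K KX; apply/seteqP; split; last exact: ext (clX K).
    move=> x /clE [Xx H]; apply/clE; split => // e p Hs.
    apply: H; apply/(third e p K KX) => //.
  + apply/seteqP; split => // x /clE [[[e p] _ Ox] H].
    apply: (H e p _ Ox); apply/disj_iff => y _ [].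
- move=> e p; split; first exact: O_sub.
  split; [by move=> x [] | exact: cl_clo].
- exact: third.
- move=> A AX; apply/seteqP; split => [[e p]|[e p]] /=.
  + move=> OA; rewrite /ent_int.
    apply/(third e p (carrier O `\` A)); first by move=> x [].
    move=> x Ox; split; first exact: O_sub Ox.
    by move=> [_]; apply; exact: OA.
  + move=> /(third e p (carrier O `\` A) (fun x (h : (carrier O `\` A) x) => h.1)).
    move=> H x Ox; have [Xx nA] := H x Ox.
    by apply: contrapT => nAx; apply: nA.
Qed.
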